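(* Let $E$ be a real symmetric $(n+m)\times(n+m)$ matrix. The following are equivalent: (a) $E\in\mathcal{E}_{n+m}$, i.e. there exist real unit vectors $a_1,\ldots,a_n,b_1,\ldots,b_m$ (in some $\mathbb{R}^r$) with $E={\rm Gram}(a_1,\ldots,a_n,b_1,\ldots,b_m)$. (b) There exist $d\ge 1$ and $d\times d$ Hermitian matrices $A_1,\ldots,A_n,B_1,\ldots,B_m$ such that (i) $E={\rm Gram}(A_1,\ldots,A_n,B_1,\ldots,B_m)$ and (ii) $A_i^2=B_j^2=\frac1d I_d$ for all $i\in\{1,\ldots,n\}$, $j\in\{1,\ldots,m\}$. (c) There exist $d\ge1$ and $d\times d$ Hermitian matrices $X_1,\ldots,X_n,Y_1,\ldots,Y_m,K$ such that (i) $E={\rm Gram}(KX_1,\ldots,KX_n,Y_1K,\ldots,Y_mK)$; (ii) $X_i^2=Y_j^2=I_d$ for all $i\in\{1,\ldots,n\}$, $j\in\{1,\ldots,m\}$; (iii) $\mathrm{Tr}(K^2)=1$ and $K$ is positive definite.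
   Context: $\mathcal{E}_{N}$ denotes the elliptope: the set of real symmetric positive semidefinite $N\times N$ matrices with all diagonal entries equal to $1$. For real vectors, ${\rm Gram}(v_1,\ldots,v_N)$ is the matrix with entries $\langle v_i,v_j\rangle$; for $d\times d$ complex matrices $M_1,\ldots,M_N$, ${\rm Gram}(M_1,\ldots,M_N)$ is the $N\times N$ matrix with $(i,j)$ entry $\mathrm{Tr}(M_iM_j^* )$. *)

(* Defs.v *)
From HB Require Import structures.
From mathcomp Require Import all_boot all_order all_algebra.
From mathcomp Require Import complex.
From mathcomp Require Import reals.
Set Implicit Arguments. Unset Strict Implicit. Unset Printing Implicit Defensive.
Import Order.TTheory GRing.Theory Num.Theory.
Local Open Scope ring_scope.

Definition adjmx (C : numClosedFieldType) (p q : nat) (M : 'M[C]_(p, q)) : 'M[C]_(q, p) :=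
  (map_mx Num.conj M)^T.

Definition herm_mx (C : numClosedFieldType) (d : nat) (M : 'M[C]_d) : Prop :=
  adjmx M = M.

Definition posdef_mx (C : numClosedFieldType) (d : nat) (M : 'M[C]_d) : Prop :=
  herm_mx M /\ forall x : 'cV[C]_d, x != 0 -> 0 < (adjmx x *m M *m x) 0 0.

Definition psd_real (R : realFieldType) (N : nat) (E : 'M[R]_N) : Prop :=
  forall x : 'cV[R]_N, 0 <= (x^T *m E *m x) 0 0.

Definition elliptope (R : realFieldType) (N : nat) (E : 'M[R]_N) : Prop :=
  E^T = E /\ psd_real E /\ forall i, E i i = 1.

Definition gram_vec (R : realFieldType) (N r : nat) (v : 'I_N -> 'rV[R]_r) : 'M[R]_N :=
  \matrix_(i, j) (v i *m (v j)^T) 0 0.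

Definition gram_mx (C : numClosedFieldType) (N d : nat) (M : 'I_N -> 'M[C]_d) : 'M[C]_N :=
  \matrix_(i, j) \tr (M i *m adjmx (M j)).

Definition catfam (T : Type) (n m : nat) (f : 'I_n -> T) (g : 'I_m -> T) (k : 'I_(n + m)) : T :=
  match split k with inl i => f i | inr j => g j end.

Definition cmx (R : rcfType) (N : nat) (E : 'M[R]_N) : 'M[R[i]]_N :=
  map_mx (fun x => x%:C%C) E.

(* Main.v *)
Require Import Defs.
From HB Require Import structures.
From mathcomp Require Import all_boot all_order all_algebra.
From mathcomp Require Import complex.
From mathcomp Require Import reals.
From mathcomp Require Import ring lra.
Set Implicit Arguments. Unset Strict Implicit. Unset Printing Implicit Defensive.
Import Order.TTheory GRing.Theory Num.Theory.
Local Open Scope ring_scope.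

Section Cx.
Variable C : numClosedFieldType.
Lemma adjmxM p q r (A : 'M[C]_(p, q)) (B : 'M[C]_(q, r)) :
  adjmx (A *m B) = adjmx B *m adjmx A.
Proof. by rewrite /adjmx map_mxM trmx_mul. Qed.
Lemma adjmxK p q (A : 'M[C]_(p, q)) : adjmx (adjmx A) = A.
Proof. by apply/matrixP=> i j; rewrite /adjmx !mxE conjCK. Qed.
Lemma adjmxZ p q c (A : 'M[C]_(p, q)) : adjmx (c *: A) = Num.conj c *: adjmx A.
Proof. by apply/matrixP=> i j; rewrite /adjmx !mxE rmorphM. Qed.
Lemma adjmx_scalar p c : adjmx (c%:M : 'M[C]_p) = (Num.conj c)%:M.
Proof. by apply/matrixP=> i j; rewrite /adjmx !mxE eq_sym; case: (i == j); rewrite /= ?mulr1n ?mulr0n ?rmorph0. Qed.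
Lemma tr_adj_ge0 p q (N : 'M[C]_(p, q)) : 0 <= \tr (N *m adjmx N).
Proof.
rewrite /mxtrace; apply: sumr_ge0 => i _; rewrite mxE; apply: sumr_ge0 => k _.
by rewrite /adjmx !mxE mul_conjC_ge0.
Qed.
End Cx.

Section Cliff.
Variable R : realFieldType.
Fixpoint CD (r : nat) : nat := match r with 0 => 1%N | r'.+1 => (CD r' + CD r')%N end.
Fixpoint CG (r : nat) : ('I_r -> R) -> 'M[R]_(CD r) :=
  match r return ('I_r -> R) -> 'M[R]_(CD r) with
  | 0 => fun _ => 0
  | r'.+1 => fun f =>
     let g := @CG r' (fun i : 'I_r' => f (widen_ord (leqnSn r') i)) in
     block_mx (f ord_max)%:M g g (- (f ord_max)%:M)
  end.

Lemma zmod_aux (V : zmodType) (a b : V) : - a + b + (- b + a) = 0.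
Proof. by rewrite addrACA -opprD [b + a]addrC addNr. Qed.

Lemma CG_sym r f : (CG f)^T = CG f :> 'M[R]_(CD r).
Proof.
elim: r f => [|r IH] f /=; first by rewrite trmx0.
by rewrite tr_block_mx !IH tr_scalar_mx raddfN /= tr_scalar_mx.
Qed.

Lemma CG_anti r (f g : 'I_r -> R) :
  CG f *m CG g + CG g *m CG f = (2 * \sum_(i < r) f i * g i)%:M.
Proof.
elim: r f g => [|r IH] f g /=; first by rewrite big_ord0 mulr0 mul0mx addr0; apply/matrixP => i j; rewrite !mxE mul0rn.
rewrite !mulmx_block add_block_mx scalar_mx_block.
rewrite big_ord_recr /= mulrDr raddfD /=.
rewrite -IH.
set G1 := CG _; set G2 := CG _.
rewrite !mul_mx_scalar !mulNmx !mulmxN !mul_scalar_mx !scale_scalar_mx opprK.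
rewrite (mulrC (g _)) mulr_natl raddfMn /= mulr2n.
congr block_mx.
- by rewrite addrACA addrC.
- by rewrite [G1 *m _]scalar_mxC [G2 *m _]scalar_mxC !mul_scalar_mx addrA subrK subrr.
- by rewrite addrA subrK subrr.
- by rewrite opprK addrACA.
Qed.


Lemma half_eq (x y : R) : x + x = 2 * y -> x = y.
Proof. move=> h; lra. Qed.

Lemma CD_gt0 r : (0 < CD r)%N.
Proof. by elim: r => //= r IH; rewrite addn_gt0 IH. Qed.

Lemma CG_sq r (f : 'I_r -> R) : CG f *m CG f = (\sum_(i < r) f i * f i)%:M.
Proof.
have h := CG_anti f f.
apply/matrixP => i j; move/matrixP: h => /(_ i j); rewrite !mxE => h.
by apply: half_eq; rewrite h mulrnAr.
Qed.

Lemma CG_tr r (f g : 'I_r -> R) :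
  \tr (CG f *m CG g) = (CD r)%:R * \sum_(i < r) f i * g i.
Proof.
have h := CG_anti f g; move: (congr1 mxtrace h); rewrite raddfD /= (mxtrace_mulC (CG g)).
rewrite mxtrace_scalar => h2; apply: half_eq; rewrite h2 -mulr_natr; ring.
Qed.
End Cliff.

Section Fact.
Variable R : rcfType.
Definition qf N (E : 'M[R]_N) (x : 'cV_N) := (x^T *m E *m x) 0 0.

Lemma qf_block N (a : 'M[R]_1) (b : 'M_(1,N)) (c : 'M_(N,1)) (d : 'M_N) t y :
  qf (block_mx a b c d) (col_mx t%:M y) =
  t^+2 * a 0 0 + t * (b *m y) 0 0 + t * (y^T *m c) 0 0 + qf d y.
Proof.
rewrite /qf tr_col_mx mul_row_block mul_row_col tr_scalar_mx !mulmxDl !mul_scalar_mx.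
rewrite -!scalemxAl !mul_mx_scalar !mxE. ring.
Qed.

Lemma mxsub00 (A B : 'M[R]_1) : (A - B) 0 0 = A 0 0 - B 0 0.
Proof. by rewrite !mxE. Qed.
Lemma mxscale00 a (A : 'M[R]_1) : (a *: A) 0 0 = a * A 0 0.
Proof. by rewrite !mxE. Qed.
Lemma mx11M (A B : 'M[R]_1) : (A *m B) 0 0 = A 0 0 * B 0 0.
Proof. by rewrite !mxE big_ord1. Qed.

Lemma psd_factor N (E : 'M[R]_N) : E^T = E -> (forall x, 0 <= qf E x) ->
  exists V : 'M[R]_N, E = V *m V^T.
Proof.
elim: N E => [|N IH] E symE psdE.
  by exists 0; apply/matrixP => [[]].
set a := ulsubmx (E : 'M_(1 + N)); set b := ursubmx (E : 'M_(1 + N)).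
set c := dlsubmx (E : 'M_(1 + N)); set d := drsubmx (E : 'M_(1 + N)).
have Eb : E = block_mx a b c d by rewrite submxK.
have bc : b = c^T by rewrite /b /c trmx_dlsub symE.
have dT : d^T = d by rewrite /d trmx_drsub symE.
set e := a 0 0.
have ae : a = e%:M by apply: mx11_scalar.
have tq : forall y : 'cV_N, (y^T *m c) 0 0 = (c^T *m y) 0 0.
  by move=> y; rewrite -(trmxK (c^T *m y)) trmx_mul trmxK [in RHS]mxE.
have qE : forall t (y : 'cV_N), qf E (col_mx t%:M y) = t^+2 * e + 2 * t * (c^T *m y) 0 0 + qf d y.
  by move=> t y; rewrite Eb qf_block -/e bc tq; ring.
have e0 : 0 <= e.
  by have := psdE (col_mx (1%:M : 'M_1) 0 : 'cV_(1 + N)); rewrite qE /qf !mulmx0 !mxE expr1n !mul1r mulr0 !addr0.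
have c0 : e = 0 -> c = 0.
  move=> ez; set s := (c^T *m c) 0 0.
  have s0 : s = 0.
    apply/eqP; apply: contraT => sn0.
    have := psdE (col_mx ((- (qf d c + 1) / (2 * s))%:M : 'M_1) c : 'cV_(1 + N)); rewrite qE ez -/s.
    have -> : 2 * (- (qf d c + 1) / (2 * s)) * s = - (qf d c + 1) by field; rewrite sn0.
    move=> h; exfalso; move: h; rewrite expr2 !mulr0 add0r; lra.
  have : s = \sum_i c i 0 ^+ 2 by rewrite /s mxE; apply: eq_bigr => i _; rewrite mxE expr2.
  rewrite s0 => /esym hs; have h := psumr_eq0P (fun i _ => sqr_ge0 (c i 0)) hs.
  apply/matrixP => k j; rewrite (ord1 j) [RHS]mxE.
  by apply/eqP; rewrite -sqrf_eq0 h.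
set S := d - e^-1 *: (c *m c^T).
have symS : S^T = S by rewrite /S raddfB /= dT linearZ /= trmx_mul trmxK.
have qS : forall y : 'cV_N, qf S y = qf d y - e^-1 * ((c^T *m y) 0 0 * (c^T *m y) 0 0).
  move=> y; rewrite /qf /S mulmxBr mulmxBl -scalemxAr -scalemxAl mxsub00 mxscale00.
  by rewrite !mulmxA -[y^T *m c *m c^T *m y]mulmxA mx11M tq.
have psdS : forall y : 'cV_N, 0 <= qf S y.
  move=> y; rewrite qS.
  have [ez|enz] := eqVneq e 0.
    rewrite ez invr0 mul0r subr0.
    by have := psdE (col_mx (0%:M : 'M_1) y : 'cV_(1 + N)); rewrite qE expr2 !(mul0r, mulr0) !add0r.
  have := psdE (col_mx ((- ((c^T *m y) 0 0 / e))%:M : 'M_1) y : 'cV_(1 + N)); rewrite qE.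
  set q := (c^T *m y) 0 0; set Qd := qf d y.
  have -> : (- (q / e)) ^+ 2 * e + 2 * - (q / e) * q + Qd = Qd - e^-1 * (q * q) by field.
  done.
have [W SW] := IH S symS psdS.
pose V : 'M[R]_(1 + N) := block_mx (Num.sqrt e)%:M 0 ((Num.sqrt e)^-1 *: c) W.
suff key : block_mx a b c d = V *m V^T by exists V; rewrite Eb.
rewrite /V tr_block_mx mulmx_block !trmx0 !mulmx0 !addr0 tr_scalar_mx -SW.
have dS : d = S + e^-1 *: (c *m c^T) by rewrite /S subrK.
rewrite dS ae bc.
have [ez|enz] := eqVneq e 0.
  rewrite (c0 ez) ez sqrtr0 -scalar_mxM mulr0 !scaler0 !trmx0 !mul0mx !mulmx0 ?scaler0 ?mul0mx !add0r ?addr0. by [].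
have sn0 : Num.sqrt e != 0 by rewrite sqrtr_eq0 -ltNge lt_neqAle eq_sym enz e0.
rewrite -scalar_mxM -expr2 sqr_sqrtr // linearZ /= -scalemxAr mul_scalar_mx scalerA.
rewrite mulVf // scale1r mul0mx addr0 mul_mx_scalar scalerA divff // scale1r.
rewrite -scalemxAl -scalemxAr scalerA -expr2 exprVn sqr_sqrtr // addrC.
done.
Qed.
End Fact.

Lemma catfam_map (T U : Type) n m (h : T -> U) (f : 'I_n -> T) (g : 'I_m -> T) k :
  catfam (fun i => h (f i)) (fun j => h (g j)) k = h (catfam f g k).
Proof. by rewrite /catfam; case: split. Qed.

Lemma catfam_ext (T : Type) n m (f f' : 'I_n -> T) (g g' : 'I_m -> T) k :
  (forall i, f i = f' i) -> (forall j, g j = g' j) -> catfam f g k = catfam f' g' k.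
Proof. by move=> hf hg; rewrite /catfam; case: split. Qed.

Lemma catfam_split (T : Type) n m (F : 'I_(n + m) -> T) k :
  catfam (fun i => F (lshift m i)) (fun j => F (rshift n j)) k = F k.
Proof.
rewrite /catfam; case: splitP => i hi; congr F; apply: val_inj => //=.
Qed.

Section Main.
Variable R : realType.
Local Notation rc := (real_complex R).

Lemma conj_rc (x : R) : Num.conj (rc x) = rc x.
Proof. exact: conjc_real. Qed.
Lemma rcV (x : R) : rc (x^-1) = (rc x)^-1.
Proof. by rewrite fmorphV. Qed.
Lemma rc_nat k : rc (k%:R) = k%:R.
Proof. by rewrite rmorph_nat. Qed.

Lemma adj_real p q (A : 'M[R]_(p, q)) : adjmx (map_mx rc A) = map_mx rc A^T.
Proof. by apply/matrixP => i j; rewrite /adjmx !mxE conj_rc. Qed.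

Lemma rowprod N r (V : 'M[R]_(N, r)) k l : (row k V *m (row l V)^T) 0 0 = (V *m V^T) k l.
Proof. by rewrite !mxE; apply: eq_bigr => p _; rewrite !mxE. Qed.

Definition RM r (v : 'rV[R]_r) : 'M[R]_(CD r) :=
  (Num.sqrt ((CD r)%:R : R))^-1 *: CG (fun p => v 0 p).

Lemma sD r : Num.sqrt ((CD r)%:R : R) ^+ 2 = (CD r)%:R.
Proof. by rewrite sqr_sqrtr // ler0n. Qed.
Lemma Dn0 r : ((CD r)%:R : R) != 0.
Proof. by rewrite pnatr_eq0 -lt0n CD_gt0. Qed.

Lemma RM_sym r (v : 'rV[R]_r) : (RM v)^T = RM v.
Proof. by rewrite /RM linearZ /= CG_sym. Qed.

Lemma RM_mul r (v w : 'rV[R]_r) :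
  RM v *m RM w = ((CD r)%:R^-1) *: (CG (fun p => v 0 p) *m CG (fun p => w 0 p)).
Proof. by rewrite /RM -scalemxAl -scalemxAr scalerA -expr2 exprVn sD. Qed.

Lemma RM_tr r (v w : 'rV[R]_r) : \tr (RM v *m RM w) = (v *m w^T) 0 0.
Proof.
rewrite RM_mul mxtraceZ CG_tr mulKf ?Dn0 // !mxE; apply: eq_bigr => p _; rewrite !mxE.
by [].
Qed.

Lemma RM_sq r (v : 'rV[R]_r) : (v *m v^T) 0 0 = 1 -> RM v *m RM v = ((CD r)%:R^-1)%:M.
Proof.
move=> h; rewrite RM_mul CG_sq scale_scalar_mx.
have -> : \sum_(i < r) v 0 i * v 0 i = 1.
  by rewrite -h !mxE; apply: eq_bigr => p _; rewrite !mxE.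
by rewrite mulr1.
Qed.

Lemma adjmxD (C : numClosedFieldType) p q (A B : 'M[C]_(p, q)) :
  adjmx (A + B) = adjmx A + adjmx B.
Proof. by apply/matrixP => i j; rewrite /adjmx !mxE rmorphD. Qed.

Lemma adjmx_sum (C : numClosedFieldType) p q I (r : seq I) (F : I -> 'M[C]_(p, q)) :
  adjmx (\sum_(i <- r) F i) = \sum_(i <- r) adjmx (F i).
Proof.
elim: r => [|x r IH]; rewrite ?big_nil ?big_cons.
  by apply/matrixP => i j; rewrite /adjmx !mxE rmorph0.
by rewrite adjmxD IH.
Qed.

Lemma adj_pos (C : numClosedFieldType) d (x : 'cV[C]_d) : x != 0 -> 0 < (adjmx x *m x) 0 0.
Proof.
move=> xn0; rewrite mxE.
have ge0 : forall k : 'I_d, true -> 0 <= adjmx x 0 k * x k 0.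
  by move=> k _; rewrite /adjmx !mxE mulrC mul_conjC_ge0.
rewrite lt_def sumr_ge0 // andbT; apply: contraNN xn0 => /eqP hs.
apply/eqP/matrixP => k j; rewrite (ord1 j) [RHS]mxE.
have := psumr_eq0P ge0 hs (i := k) isT.
by rewrite /adjmx !mxE mulrC => /eqP; rewrite mul_conjC_eq0 => /eqP.
Qed.

End Main.

Theorem lemma2p6 (R : realType) (n m : nat) (E : 'M[R]_(n + m)) (hE : E^T = E) :
  [<-> (* (a) *) elliptope E;
       (* (a), Gram form *)
       exists (r : nat) (a : 'I_n -> 'rV[R]_r) (b : 'I_m -> 'rV[R]_r),
         (forall i, (a i *m (a i)^T) 0 0 = 1) /\
         (forall j, (b j *m (b j)^T) 0 0 = 1) /\
         E = gram_vec (catfam a b);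
       (* (b) *)
       exists (d : nat) (A : 'I_n -> 'M[R[i]]_d) (B : 'I_m -> 'M[R[i]]_d),
         (0 < d)%N /\
         (forall i, herm_mx (A i)) /\ (forall j, herm_mx (B j)) /\
         cmx E = gram_mx (catfam A B) /\
         (forall i, A i *m A i = (d%:R^-1)%:M) /\
         (forall j, B j *m B j = (d%:R^-1)%:M);
       (* (c) *)
       exists (d : nat) (X : 'I_n -> 'M[R[i]]_d) (Y : 'I_m -> 'M[R[i]]_d)
              (K : 'M[R[i]]_d),
         (0 < d)%N /\
         (forall i, herm_mx (X i)) /\ (forall j, herm_mx (Y j)) /\
         herm_mx K /\
         cmx E = gram_mx (catfam (fun i => K *m X i) (fun j => Y j *m K)) /\
         (forall i, X i *m X i = 1%:M) /\ (forall j, Y j *m Y j = 1%:M) /\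
         \tr (K *m K) = 1 /\ posdef_mx K].
Proof.
tfae.
-
  move=> [symE [psdE diagE]].
  have [V EV] := psd_factor symE psdE.
  exists (n + m)%N, (fun i => row (lshift m i) V), (fun j => row (rshift n j) V).
  split; [|split].
  + by move=> i; rewrite rowprod -EV diagE.
  + by move=> j; rewrite rowprod -EV diagE.
  + apply/matrixP => k l; rewrite /gram_vec mxE !(catfam_split (fun k => row k V)) rowprod -EV //.
-
  move=> [r [a [b [ha [hb hE']]]]].
  exists (CD r), (fun i => map_mx (real_complex R) (RM (a i))), (fun j => map_mx (real_complex R) (RM (b j))).
  split; first exact: CD_gt0.
  split; first by move=> i; rewrite /herm_mx adj_real RM_sym.
  split; first by move=> j; rewrite /herm_mx adj_real RM_sym.
  split.
    apply/matrixP => k l; rewrite /gram_mx /cmx !mxE.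
    rewrite !(catfam_map (fun v => map_mx (real_complex R) (RM v))) adj_real RM_sym -map_mxM trace_map_mx RM_tr.
    by rewrite hE' /gram_vec mxE.
  split.
    by move=> i; rewrite -map_mxM RM_sq // map_scalar_mx /= rcV rc_nat.
  by move=> j; rewrite -map_mxM RM_sq // map_scalar_mx /= rcV rc_nat.
-
  move=> [d [A [B [d0 [hA [hB [hG [hA2 hB2]]]]]]]].
  pose s := (real_complex R) (Num.sqrt (d%:R : R)).
  have sgt0 : 0 < Num.sqrt (d%:R : R) by rewrite sqrtr_gt0 ltr0n.
  have sn0 : s != 0 by rewrite /s; apply: contraTN sgt0 => /eqP h; rewrite (complexI (h : _ = real_complex R 0)) ltxx.
  have cs : Num.conj s = s by exact: conj_rc.
  have s2 : s ^+ 2 = d%:R.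
    by rewrite /s -rmorphXn sqr_sqrtr ?ler0n // rmorph_nat.
  have dn0 : (d%:R : R[i]) != 0 by rewrite pnatr_eq0 -lt0n.
  exists d, (fun i => s *: A i), (fun j => s *: B j), (s^-1)%:M.
  split; first done.
  split; first by move=> i; rewrite /herm_mx adjmxZ cs hA.
  split; first by move=> j; rewrite /herm_mx adjmxZ cs hB.
  split. by rewrite /herm_mx adjmx_scalar; congr (_%:M); rewrite fmorphV; congr (_^-1); exact: cs.
  split.
    rewrite hG; apply/matrixP => k l; rewrite !mxE.
    have e1 : forall i, (s^-1)%:M *m (s *: A i) = A i.
      by move=> i; rewrite mul_scalar_mx scalerA mulVf // scale1r.
    have e2 : forall j, (s *: B j) *m (s^-1)%:M = B j.
      by move=> j; rewrite mul_mx_scalar scalerA mulVf // scale1r.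
    by rewrite !(catfam_ext _ e1 e2).
  split.
    by move=> i; rewrite -scalemxAl -scalemxAr scalerA -expr2 s2 hA2 scale_scalar_mx divff.
  split.
    by move=> j; rewrite -scalemxAl -scalemxAr scalerA -expr2 s2 hB2 scale_scalar_mx divff.
  split.
    by rewrite -scalar_mxM mxtrace_scalar -mulr_natr -invfM -expr2 s2 mulVf.
  split. by rewrite /herm_mx adjmx_scalar; congr (_%:M); rewrite fmorphV; congr (_^-1); exact: cs.
  move=> x xn0; rewrite mul_mx_scalar -scalemxAl mxE.
  apply: mulr_gt0; last exact: adj_pos.
  by rewrite invr_gt0 /s ltcR.
-
  move=> [d [X [Y [K [d0 [hX [hY [hK [hG [hX2 [hY2 [trK pdK]]]]]]]]]]]].
  set M := catfam _ _ in hG.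
  have gE : forall k l, (real_complex R) (E k l) = \tr (M k *m adjmx (M l)).
    by move=> k l; move/matrixP: hG => /(_ k l); rewrite !mxE.
  split; first exact: hE.
  split.
    move=> x; rewrite -ler0c.
    pose Nx := \sum_k (real_complex R) (x k 0) *: M k.
    suff -> : (real_complex R) ((x^T *m E *m x) 0 0) = \tr (Nx *m adjmx Nx) by exact: tr_adj_ge0.
    rewrite adjmx_sum mulmx_suml.
    under eq_bigr do rewrite mulmx_sumr.
    rewrite raddf_sum /=.
    under eq_bigr do rewrite raddf_sum /=.
    rewrite mxE rmorph_sum /=.
    have Es : forall k l, E k l = E l k by move=> k l; rewrite -{1}hE mxE.
    apply: eq_bigr => l _; rewrite mxE rmorphM /= rmorph_sum big_distrl /=.
    apply: eq_bigr => k _.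
    rewrite !mxE rmorphM /= Es gE adjmxZ conj_rc -scalemxAl -scalemxAr !mxtraceZ.
    ring.
  move=> k; apply: complexI; rewrite gE /M /catfam; case: split => [i|j].
    rewrite adjmxM hX hK mulmxA -(mulmxA K) hX2 mulmx1.
    by rewrite trK rmorph1.
  rewrite adjmxM hY hK mulmxA mxtrace_mulC !mulmxA hY2 mul1mx.
  by rewrite trK rmorph1.
Qed.
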